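(* Let $k\ge 1$ be the cache size. Considering all request sequences, with no restriction on which pages may follow which (equivalently, the complete access graph), \[ \mathcal{I}[\mathrm{FIFO},\mathrm{LRU}]=\left[-1+\frac{1}{k},\ \frac{1}{2}-\frac{1}{4k-2}\right]. \]
   Context: Paging: a cache holds at most $k$ pages and is initially empty. A request sequence is a finite sequence of pages. A request to a page in the cache is a hit; otherwise it is a fault, the page is brought into the cache, and if the cache is full some page is evicted first. $\mathcal{A}(I)$ denotes the number of faults of algorithm $\mathcal{A}$ on $I$. LRU evicts the cached page whose most recent request is earliest. FIFO evicts the cached page that entered the cache earliest. Relative interval: for algorithms $\mathcal{A},\mathcal{B}$ and a set of allowed sequences (here all sequences), let $\mathrm{Min}_{\mathcal{A},\mathcal{B}}(n)=\min_{|I|=n}\{\mathcal{A}(I)-\mathcal{B}(I)\}$ and $\mathrm{Max}_{\mathcal{A},\mathcal{B}}(n)=\max_{|I|=n}\{\mathcal{A}(I)-\mathcal{B}(I)\}$, the min/max being over allowed sequences of length $n$; $\mathrm{Min}(\mathcal{A},\mathcal{B})=\liminf_{n\to\infty}\mathrm{Min}_{\mathcal{A},\mathcal{B}}(n)/n$, $\mathrm{Max}(\mathcal{A},\mathcal{B})=\limsup_{n\to\infty}\mathrm{Max}_{\mathcal{A},\mathcal{B}}(n)/n$, and $\mathcal{I}[\mathcal{A},\mathcal{B}]=[\mathrm{Min}(\mathcal{A},\mathcal{B}),\mathrm{Max}(\mathcal{A},\mathcal{B})]$. *)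

(* Defs.v *)
From mathcomp Require Import all_boot all_order all_algebra.
From mathcomp Require Import all_classical all_reals all_analysis.
Set Implicit Arguments. Unset Strict Implicit. Unset Printing Implicit Defensive.
Import Order.TTheory GRing.Theory Num.Theory.

(* A cache is represented as a list of (distinct) pages.
   - LRU: list ordered by most recent request (most recent first);
     on a fault with a full cache the last element (least recently used) is evicted.
   - FIFO: list ordered by entry time (most recent entry first);
     on a fault with a full cache the last element (earliest entered) is evicted. *)

Definition insert_fault (k : nat) (p : nat) (c : seq nat) : seq nat :=
  p :: (if size c < k then c else take k.-1 c).

Definition lru_step (k : nat) (c : seq nat) (p : nat) : seq nat :=
  if p \in c then p :: rem p c else insert_fault k p c.

Definition fifo_step (k : nat) (c : seq nat) (p : nat) : seq nat :=
  if p \in c then c else insert_fault k p c.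

Fixpoint faults_from (step : seq nat -> nat -> seq nat) (c : seq nat) (I : seq nat) : nat :=
  match I with
  | [::] => 0
  | p :: I' => (p \notin c) + faults_from step (step c p) I'
  end.

Definition LRU (k : nat) (I : seq nat) : nat := faults_from (lru_step k) [::] I.
Definition FIFO (k : nat) (I : seq nat) : nat := faults_from (fifo_step k) [::] I.

Local Open Scope ring_scope.
Local Open Scope classical_set_scope.

Definition diff_set (R : realType) (A B : seq nat -> nat) (n : nat) : set R :=
  [set x | exists I : seq nat, size I = n /\ x = (A I)%:R - (B I)%:R].

(* Min_{A,B}(n) and Max_{A,B}(n) (the sets are finite, nonempty and bounded by n) *)
Definition MinAB (R : realType) (A B : seq nat -> nat) (n : nat) : R := inf (@diff_set R A B n).
Definition MaxAB (R : realType) (A B : seq nat -> nat) (n : nat) : R := sup (@diff_set R A B n).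

Definition RelMin (R : realType) (A B : seq nat -> nat) : \bar R :=
  limn_einf (fun n => (@MinAB R A B n / n%:R)%:E).
Definition RelMax (R : realType) (A B : seq nat -> nat) : \bar R :=
  limn_esup (fun n => (@MaxAB R A B n / n%:R)%:E).

(* Main.v *)
Require Import Defs.
From mathcomp Require Import all_boot all_order all_algebra.
From mathcomp Require Import all_classical all_reals all_analysis.
From mathcomp Require Import ring lra zify.
Import Order.TTheory GRing.Theory Num.Theory.
Set Implicit Arguments. Unset Strict Implicit. Unset Printing Implicit Defensive.

Lemma insert_faultE k p c : 0 < k -> size c <= k -> insert_fault k p c = take k (p :: c).
Proof.
case: k => // k _ hc; rewrite /insert_fault /=.
case: ifP => h; first by rewrite take_oversize.
by [].
Qed.

Definition inv k (F L : seq nat) :=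
  [/\ uniq F, uniq L, size F = size L, size L <= k & (size F < k -> F =i L)].

Lemma inv0 k : inv k [::] [::].
Proof. by split. Qed.

Lemma full_FL k F L p : inv k F L -> p \in F -> p \notin L -> size F = k.
Proof.
case=> uF uL sFL sL E pF pL; apply/eqP; rewrite eqn_leq sFL sL /=.
rewrite leqNgt; apply/negP => lt; have h := E (etrans (f_equal (fun x => x < k) sFL) lt); by rewrite -(h p) pF in pL.
Qed.

Lemma full_LF k F L p : inv k F L -> p \notin F -> p \in L -> size F = k.
Proof.
case=> uF uL sFL sL E pF pL; apply/eqP; rewrite eqn_leq sFL sL /=.
rewrite leqNgt; apply/negP => lt; have h := E (etrans (f_equal (fun x => x < k) sFL) lt); by rewrite (h p) pL in pF.
Qed.

Lemma has_notin k F L p : inv k F L -> p \in L -> p \notin F ->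
  has (fun x => x \notin L) F.
Proof.
case=> uF uL sFL sL E pL pF; apply/negPn/negP => /hasPn h.
have sub : {subset F <= L} by move=> x /h; rewrite negbK.
have [_ e] := uniq_min_size uF sub (eq_leq (esym sFL)).
by rewrite e pL in pF.
Qed.


Lemma take_cons_full k p (L : seq nat) : 0 < k -> size L = k ->
  take k (p :: L) = p :: take k.-1 L.
Proof. by case: k. Qed.

Lemma size_rem_cons (p : nat) L : p \in L -> size (p :: rem p L) = size L.
Proof. by move=> pL; rewrite /= size_rem // prednK //; case: (L) pL. Qed.

Lemma inv_step k F L p : 0 < k -> inv k F L ->
  inv k (fifo_step k F p) (lru_step k L p).
Proof.
move=> hk I; have [uF uL sFL sL E] := I.
rewrite /fifo_step /lru_step.
case: (boolP (p \in F)) => pF; case: (boolP (p \in L)) => pL.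
- split => //=; first by rewrite mem_rem_uniqF // rem_uniq.
  + by rewrite -/(size (p :: rem p L)) size_rem_cons.
  + by rewrite -/(size (p :: rem p L)) size_rem_cons.
  + move=> h x; rewrite in_cons mem_rem_uniq // inE (E h).
    by case: (x =P p) => [->|].
- have fF := full_FL I pF pL.
  rewrite insert_faultE // -?sFL ?fF //.
  have uL' : uniq (p :: L) by rewrite /= pL.
  split => //; first exact: take_uniq.
  + by rewrite size_take_min /= -sFL fF; lia.
  + by rewrite size_take_min; lia.
  + by rewrite fF ltnn.
- have fF := full_LF I pF pL.
  rewrite insert_faultE // ?fF //.
  have uF' : uniq (p :: F) by rewrite /= pF.
  split => //; first exact: take_uniq.
  + by rewrite /= mem_rem_uniqF // rem_uniq.
  + by rewrite size_rem_cons // size_take_min /= fF -sFL; lia.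
  + by rewrite size_rem_cons // -sFL fF.
  + by rewrite size_take_min /= fF; lia.
- rewrite !insert_faultE // ?sFL //.
  have uF' : uniq (p :: F) by rewrite /= pF.
  have uL' : uniq (p :: L) by rewrite /= pL.
  split; try exact: take_uniq.
  + by rewrite !size_take_min /= sFL.
  + by rewrite size_take_min; lia.
  + rewrite size_take_min /= => h.
    have hF : size F < k.
      by move: h; lia.
    have e := E hF.
    rewrite !take_oversize /= -?sFL //; try exact: ltnW.
    by move=> x; rewrite !in_cons e.
Qed.


Lemma lru_cons k L p : exists L', lru_step k L p = p :: L'.
Proof. by rewrite /lru_step /insert_fault; case: ifP; eexists. Qed.

Lemma fifo_mem k F p : p \in fifo_step k F p.
Proof. by rewrite /fifo_step /insert_fault; case: ifP => //; rewrite in_cons eqxx. Qed.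

Definition W k (F L : seq nat) r :=
  (F = [::] /\ L = [::] /\ r = 0) \/ [/\ r < k, r < size L & {subset take r.+1 L <= F}].

Lemma lb_ind k (hk : 0 < k) s : forall F L r, inv k F L -> W k F L r ->
  k * faults_from (lru_step k) L s <=
  k * faults_from (fifo_step k) F s + (k - 1) * size s + (k - 1 - r).
Proof.
elim: s => [|p s IH] F L r I Wr /=; first by rewrite !muln0.
have I' := inv_step p hk I.
have [uF uL sFL sL E] := I.
set F' := fifo_step k F p; set L' := lru_step k L p.
have [L'' hL'] := lru_cons k L p.
case: (boolP ((p \in F) && (p \notin L))) => [/andP [pF pL] | nB].
-
  have fF := full_FL I pF pL.
  have [[F0 _]|[rk rL sub]] := Wr; first by rewrite F0 in pF.
  have rk1 : r.+1 < k.
    rewrite ltn_neqAle rk andbT; apply/negP => /eqP er.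
    have sub' : {subset L <= F}.
      by move=> x xL; apply: sub; rewrite er take_oversize // -sFL fF.
    have [_ e] := uniq_min_size uL sub' (eq_leq sFL).
    by rewrite e pF in pL.
  have W' : W k F' L' r.+1.
    right; split => //.
      by rewrite /L' /lru_step (negbTE pL) /insert_faultE /insert_fault -sFL fF ltnn /= size_takel; lia.
    rewrite /L' /F' /lru_step /fifo_step (negbTE pL) pF /insert_fault -sFL fF ltnn.
    rewrite take_cons => x; rewrite in_cons => /orP [/eqP -> //|].
    by rewrite take_takel; [exact: sub|lia].
  have := IH F' L' r.+1 I' W'.
  rewrite pF pL /=; lia.
- have W' : W k F' L' 0.
    right; split => //; first by rewrite /L' hL'.
    rewrite /L' hL' /= => x; rewrite in_cons take0 in_nil orbF => /eqP ->; exact: fifo_mem.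
  have := IH F' L' 0 I' W'.
  move: nB; case: (p \in F); case: (p \in L) => //= _; nia.
Qed.

Lemma lower_bound k (hk : 0 < k) I :
  k * LRU k I <= k * FIFO k I + (k - 1) * size I + (k - 1).
Proof.
have := lb_ind hk I (inv0 k) (or_introl (conj erefl (conj erefl erefl))).
by rewrite subn0.
Qed.


Lemma find_take_min (T : Type) (a : pred T) n s : find a (take n s) = minn n (find a s).
Proof.
elim: s n => [|x s IH] [|n] /=; try lia.
by case: (a x) => //; rewrite IH minnSS.
Qed.

Lemma before_cons (s : seq nat) p x y : x != p ->
  (index y (p :: s) < index x (p :: s)) = (y == p) || (index y s < index x s).
Proof.
move=> xp /=; rewrite (eq_sym p x) (negbTE xp) (eq_sym p y).
by case: (y == p).
Qed.

Lemma before_take (s : seq nat) n (x y : nat) : x \in take n s ->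
  (index y (take n s) < index x (take n s)) = (index y s < index x s).
Proof.
move=> xt.
have e z : index z s = if z \in take n s then index z (take n s)
    else size (take n s) + index z (drop n s).
  by rewrite -{1}(cat_take_drop n s) index_cat.
rewrite (e x) (e y) xt; case: ifP => yt //.
rewrite (memNindex (negbT yt)).
have h := index_mem x (take n s); rewrite xt in h; apply/idP/idP => h2; [have := ltn_trans h h2 | have := ltn_trans h (leq_ltn_trans (leq_addr _ _) h2)]; by rewrite ltnn.
Qed.

Lemma rem_mid (s1 s2 : seq nat) p : p \notin s1 -> rem p (s1 ++ p :: s2) = s1 ++ s2.
Proof.
elim: s1 => [|x s1 IH] /=; first by rewrite eqxx.
by rewrite in_cons negb_or => /andP [/negbTE xp /IH ->]; rewrite eq_sym xp.
Qed.

Lemma index_cons_neq (s : seq nat) (p z : nat) : z != p -> index z (p :: s) = (index z s).+1.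
Proof. by move=> zp /=; rewrite eq_sym (negbTE zp). Qed.

Lemma before_rem (s : seq nat) (p x y : nat) : uniq s -> x != p -> y != p ->
  (index y (rem p s) < index x (rem p s)) = (index y s < index x s).
Proof.
move=> us xp yp.
case: (boolP (p \in s)) => ps; last by rewrite rem_id.
case: (path.splitPr ps) us => s1 s2.
rewrite cat_uniq /= negb_or => /and3P [_ /andP [ps1 _] _].
rewrite rem_mid // !index_cat !index_cons_neq //.
have hx := index_mem x s1; have hy := index_mem y s1.
case: (x \in s1) hx; case: (y \in s1) hy => hy hx //;
  set a := index y s1 in hy *; set b := index x s1 in hx *; set c := size s1 in hx hy *;
  set d := index x s2; set e := index y s2; apply/idP/idP; lia.
Qed.


Lemma insert_fault_take k p (c : seq nat) : 0 < k -> size c <= k ->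
  insert_fault k p c = p :: take k.-1 c.
Proof.
move=> hk hc; rewrite /insert_fault; case: ifP => // h.
by rewrite take_oversize //; lia.
Qed.

Lemma index_inj_mem (s : seq nat) (x y : nat) : x \in s -> index y s = index x s -> y = x.
Proof. by move=> xs e; rewrite -(nth_index 0 xs) -e nth_index // -index_mem e index_mem. Qed.

Lemma last_before (F : seq nat) k (q y : nat) : size F = k -> q \in F ->
  q \notin take k.-1 F -> y \in F -> y != q -> index y F < index q F.
Proof.
move=> sF qF qt yF yq.
have h1 : k.-1 <= index q F by move: qt; rewrite in_take // -leqNgt.
have h2 := index_mem q F; rewrite qF sF in h2.
have h3 := index_mem y F; rewrite yF sF in h3.
have h4 : index y F != index q F by apply/eqP => /(index_inj_mem qF) /eqP; rewrite (negbTE yq).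
move: h1 h2 h3 h4; set a := index y F; set b := index q F => h1 h2 h3 /eqP h4; lia.
Qed.

Lemma evict_idx k (F L : seq nat) (q : nat) : uniq F -> size F = k -> q \in F ->
  q \notin take k.-1 F -> q \in L ->
  (forall y, index y F < index q F -> index y L < index q L) -> k.-1 <= index q L.
Proof.
move=> uF sF qF qt qL J.
have sub : {subset rem q F <= take (index q L) L}.
  move=> y; rewrite mem_rem_uniq // inE => /andP [yq yF].
  have h := J y (last_before sF qF qt yF yq).
  have yL : y \in L.
    by rewrite -index_mem (ltn_trans h) // index_mem.
  by rewrite in_take.
have := uniq_leq_size (rem_uniq q uF) sub.
by rewrite size_rem // sF size_take_min; lia.
Qed.

Definition psi (F L : seq nat) := size F - find (fun x => x \notin L) F.
Definition Cstep (F C : seq nat) p := if p \in F then p :: rem p C else rem p C.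
Definition inv2 k (F L C : seq nat) :=
  [/\ inv k F L, uniq C, (forall q, q \in L -> q \notin F -> q \in C) &
   (forall x y, x \in F -> x \notin C -> x \in L -> index y F < index x F ->
      index y L < index x L)].

Lemma inv20 k : inv2 k [::] [::] [::].
Proof. by split => //; exact: inv0. Qed.


Lemma fifo_hit k F p : p \in F -> fifo_step k F p = F.
Proof. by rewrite /fifo_step => ->. Qed.
Lemma fifo_miss k F p : 0 < k -> size F <= k -> p \notin F -> fifo_step k F p = p :: take k.-1 F.
Proof. by move=> hk sF pF; rewrite /fifo_step (negbTE pF) insert_fault_take. Qed.
Lemma lru_hit k L p : p \in L -> lru_step k L p = p :: rem p L.
Proof. by rewrite /lru_step => ->. Qed.
Lemma lru_miss k L p : 0 < k -> size L <= k -> p \notin L -> lru_step k L p = p :: take k.-1 L.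
Proof. by move=> hk sF pF; rewrite /lru_step (negbTE pF) insert_fault_take. Qed.
Lemma Cstep_hit F C p : p \in F -> Cstep F C p = p :: rem p C.
Proof. by rewrite /Cstep => ->. Qed.
Lemma Cstep_miss F C p : p \notin F -> Cstep F C p = rem p C.
Proof. by rewrite /Cstep => /negbTE ->. Qed.

Lemma index_head (s : seq nat) (p : nat) : index p (p :: s) = 0.
Proof. by rewrite /= eqxx. Qed.

Lemma inv2_step k F L C p : 0 < k -> inv2 k F L C ->
  inv2 k (fifo_step k F p) (lru_step k L p) (Cstep F C p).
Proof.
move=> hk I2; have [I uC J1 J2] := I2; have [uF uL sFL sL E] := I.
have remC x : x != p -> (x \in rem p C) = (x \in C).
  by move=> xp; rewrite mem_rem_uniq // inE xp.
have sF : size F <= k by rewrite sFL.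
split; first exact: inv_step.
- by rewrite /Cstep; case: ifP => _ /=; [rewrite mem_rem_uniqF // rem_uniq | exact: rem_uniq].
- case: (boolP (p \in F)) => pF; case: (boolP (p \in L)) => pL;
    (try rewrite (fifo_hit k pF)); (try rewrite (fifo_miss hk sF pF));
    (try rewrite (lru_hit k pL)); (try rewrite (lru_miss hk sL pL));
    (try rewrite (Cstep_hit C pF)); (try rewrite (Cstep_miss C pF)) => q.
  + rewrite in_cons => /orP [/eqP -> | qL] qF; first by rewrite pF in qF.
    have qp : q != p by apply: contraNneq qF => ->.
    by rewrite in_cons remC // J1 ?orbT // (mem_rem qL).
  + rewrite in_cons => /orP [/eqP -> | qL] qF; first by rewrite pF in qF.
    have qp : q != p by apply: contraNneq qF => ->.
    by rewrite in_cons remC // J1 ?orbT // (mem_take qL).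
  + rewrite !in_cons negb_or => /orP [/eqP -> | qL] /andP [qp qF]; first by rewrite eqxx in qp.
    have qL' := mem_rem qL.
    rewrite remC //; case: (boolP (q \in F)) => qF'; last exact: J1.
    have fF := full_LF I pF pL.
    apply/negPn/negP => qC.
    have sub : {subset p :: F <= L}.
      move=> y; rewrite in_cons => /orP [/eqP -> // | yF].
      case: (y =P q) => [-> // | /eqP yq].
      have h := J2 q y qF' qC qL' (last_before fF qF' qF yF yq).
      by rewrite -index_mem (ltn_trans h) // index_mem.
    have := uniq_leq_size (s1 := p :: F) _ sub; rewrite /= pF uF -sFL => /(_ isT).
    by rewrite ltnn.
  + rewrite !in_cons negb_or => /orP [/eqP -> | qL] /andP [qp qF]; first by rewrite eqxx in qp.
    have qL' := mem_take qL.
    rewrite remC //; case: (boolP (q \in F)) => qF'; last exact: J1.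
    have fF : size F = k.
      apply/eqP; rewrite eqn_leq sF leqNgt; apply/negP => lt.
      by rewrite take_oversize in qF; [rewrite qF' in qF | by rewrite -ltnS prednK].
    apply/negPn/negP => qC.
    have := evict_idx uF fF qF' qF qL' (fun y => J2 q y qF' qC qL').
    by move: qL; rewrite in_take // => h1 h2; lia.
- case: (boolP (p \in F)) => pF; case: (boolP (p \in L)) => pL;
    (try rewrite (fifo_hit k pF)); (try rewrite (fifo_miss hk sF pF));
    (try rewrite (lru_hit k pL)); (try rewrite (lru_miss hk sL pL));
    (try rewrite (Cstep_hit C pF)); (try rewrite (Cstep_miss C pF)) => x y.
  + move=> xF; rewrite !in_cons negb_or => /andP [xp xC]; rewrite remC // in xC.
    rewrite (negbTE xp) /= => xL hyx; have xL' := mem_rem xL.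
    rewrite before_cons //; case: (y =P p) => //= /eqP yp.
    by rewrite before_rem // J2.
  + have fF := full_FL I pF pL.
    move=> xF; rewrite !in_cons negb_or => /andP [xp xC]; rewrite remC // in xC.
    rewrite (negbTE xp) /= => xL hyx; have xL' := mem_take xL.
    rewrite before_cons //; case: (y =P p) => //= /eqP yp.
    by rewrite before_take // J2.
  + rewrite in_cons => /orP [/eqP -> | xF]; first by rewrite index_head ltn0.
    move=> xC; have [xp|xp] := eqVneq x p; first by rewrite xp index_head ltn0.
    rewrite remC // in xC; rewrite in_cons (negbTE xp) orFb => xL.
    rewrite !before_cons //; case: (y =P p) => //= /eqP yp.
    rewrite before_take // before_rem // => hyx.
    by apply: J2 => //; [exact: mem_take xF | exact: mem_rem xL].
  + rewrite in_cons => /orP [/eqP -> | xF]; first by rewrite index_head ltn0.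
    move=> xC; have [xp|xp] := eqVneq x p; first by rewrite xp /= eqxx ltn0.
    rewrite remC // in xC; rewrite in_cons (negbTE xp) orFb => xL.
    rewrite !before_cons //; case: (y =P p) => //= /eqP yp.
    rewrite !before_take // => hyx.
    by apply: J2 => //; [exact: mem_take xF | exact: mem_take xL].
Qed.


Lemma size_rem_leq (p : nat) (C : seq nat) : size (rem p C) <= size C.
Proof. by case: (boolP (p \in C)) => h; [rewrite size_rem // leq_pred | rewrite rem_id]. Qed.

Lemma psi_le F L : psi F L <= size F.
Proof. by rewrite /psi leq_subr. Qed.

Lemma psi_pos F L : has (fun x => x \notin L) F -> 0 < psi F L.
Proof. by rewrite /psi has_find subn_gt0. Qed.

Lemma psi_cons (F L : seq nat) p : psi (p :: F) (p :: L) = psi F (p :: L).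
Proof. by rewrite /psi /= in_cons eqxx /= subSS. Qed.

Lemma psi_eqL F L L' : L =i L' -> psi F L = psi F L'.
Proof. by move=> e; rewrite /psi (eq_find (a2 := fun x => x \notin L')) // => x; rewrite e. Qed.

Lemma mem_rem_cons (L : seq nat) p : uniq L -> p \in L -> p :: rem p L =i L.
Proof.
move=> uL pL x; rewrite in_cons mem_rem_uniq // inE.
by case: (x =P p) => // ->.
Qed.

Lemma pot_step k F L C p : 0 < k -> inv2 k F L C ->
  (2 * k - 1) * (p \notin F) + ((k - 1) * size (Cstep F C p) + psi (fifo_step k F p) (lru_step k L p))
  <= (2 * k - 1) * (p \notin L) + (k - 1) + ((k - 1) * size C + psi F L).
Proof.
move=> hk I2; have [I uC J1 J2] := I2; have [uF uL sFL sL E] := I.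
have sF : size F <= k by rewrite sFL.
have sremC : size (rem p C) <= size C := size_rem_leq p C.
have psiF := psi_le F L.
case: (boolP (p \in F)) => pF; case: (boolP (p \in L)) => pL;
  (try rewrite (fifo_hit k pF)); (try rewrite (fifo_miss hk sF pF));
  (try rewrite (lru_hit k pL)); (try rewrite (lru_miss hk sL pL));
  (try rewrite (Cstep_hit C pF)); (try rewrite (Cstep_miss C pF)) => /=.
-
  rewrite (psi_eqL F (mem_rem_cons uL pL)).
  move: sremC; set c := size C; set c' := size (rem p C); set q := psi F L; nia.
-
  have fF := full_FL I pF pL.
  have ps : 0 < psi F L.
    by apply: psi_pos; apply/hasP; exists p.
  have h := psi_le F (p :: take k.-1 L).
  move: sremC ps h psiF; rewrite fF.
  set c := size C; set c' := size (rem p C); set q := psi F L; set q' := psi F _; nia.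
-
  have fF := full_LF I pF pL.
  have pC : p \in C by apply: J1.
  have sC : size (rem p C) = (size C).-1 by rewrite size_rem.
  have C0 : 0 < size C by case: (C) pC.
  have hn := has_notin I pL pF.
  rewrite psi_cons (psi_eqL _ (mem_rem_cons uL pL)).
  have e : psi (take k.-1 F) L = (psi F L).-1.
    rewrite /psi find_take_min size_take_min fF.
    have := find_size (fun x => x \notin L) F; rewrite has_find fF in hn.
    set f := find _ F; move=> hf; lia.
  rewrite e; have ps := psi_pos hn.
  move: sC C0 ps; set c := size C; set c' := size (rem p C); set q := psi F L; nia.
-
  rewrite psi_cons.
  have h : psi (take k.-1 F) (p :: take k.-1 L) <= k - 1.
    by apply: leq_trans (psi_le _ _) _; rewrite size_take_min; lia.
  move: h sremC; set c := size C; set c' := size (rem p C); set q := psi F L; set q' := psi _ _; nia.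
Qed.


Lemma ub_ind k (hk : 0 < k) s : forall F L C, inv2 k F L C ->
  (2 * k - 1) * faults_from (fifo_step k) F s <=
  (2 * k - 1) * faults_from (lru_step k) L s + (k - 1) * size s + ((k - 1) * size C + psi F L).
Proof.
elim: s => [|p s IH] F L C I2 /=; first by rewrite !muln0.
have := pot_step p hk I2.
have := IH _ _ _ (inv2_step p hk I2).
set a := faults_from _ _ s; set b := faults_from _ _ s.
set u := (p \notin F : nat); set v := (p \notin L : nat).
set X := (k - 1) * size (Cstep F C p) + psi _ _.
set Y := (k - 1) * size C + psi F L.
rewrite !mulnDr; lia.
Qed.

Lemma upper_bound k (hk : 0 < k) I :
  (2 * k - 1) * FIFO k I <= (2 * k - 1) * LRU k I + (k - 1) * size I.
Proof.
have := ub_ind hk I (inv20 k).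
by rewrite /psi /= muln0 !addn0.
Qed.


Lemma faults_cat step c s1 s2 :
  faults_from step c (s1 ++ s2) = faults_from step c s1 + faults_from step (foldl step c s1) s2.
Proof. by elim: s1 c => [|p s1 IH] c //=; rewrite IH addnA. Qed.

Lemma iotaS_r m n : iota m n.+1 = rcons (iota m n) (m + n).
Proof. by rewrite -addn1 iotaD cats1. Qed.

Lemma rev_iotaS m n : rev (iota m n.+1) = (m + n) :: rev (iota m n).
Proof. by rewrite iotaS_r rev_rcons. Qed.

Definition miss_ok k (step : seq nat -> nat -> seq nat) :=
  forall c p, p \notin c -> step c p = insert_fault k p c.

Lemma fifo_ok k : miss_ok k (fifo_step k).
Proof. by move=> c p h; rewrite /fifo_step (negbTE h). Qed.

Lemma lru_ok k : miss_ok k (lru_step k).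
Proof. by move=> c p h; rewrite /lru_step (negbTE h). Qed.

Lemma runA k step j (hk : 0 < k) : miss_ok k step -> forall n m, m + n = k ->
  faults_from step (iota (j.+1 + n) m ++ iota j n) (rev (iota j.+1 n)) = n /\
  foldl step (iota (j.+1 + n) m ++ iota j n) (rev (iota j.+1 n)) = iota j.+1 k.
Proof.
move=> ok; elim=> [|n IH] m e.
  by rewrite addn0 in e; rewrite e addn0 cats0.
rewrite rev_iotaS /=.
have nin : j.+1 + n \notin iota (j.+1 + n.+1) m ++ iota j n.+1.
  by rewrite mem_cat !mem_iota negb_or; apply/andP; split; apply/negP; lia.
have sz : size (iota (j.+1 + n.+1) m ++ iota j n.+1) <= k by rewrite size_cat !size_iota; lia.
rewrite ok // (insert_fault_take _ hk sz).
have -> : (j.+1 + n) :: take k.-1 (iota (j.+1 + n.+1) m ++ iota j n.+1)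
          = iota (j.+1 + n) m.+1 ++ iota j n.
  rewrite take_cat size_iota.
  have [lt|ge] := ltnP k.-1 m; first lia.
  rewrite /= addnS -addSn; congr (_ :: _ ++ _).
  have -> : k.-1 - m = n by lia.
  by rewrite -/(iota j n.+1) take_iota; congr iota; lia.
by have [-> ->] := IH m.+1 ltac:(lia); rewrite nin.
Qed.


Lemma runB k step (hk : 0 < k) : miss_ok k step -> forall n m, n + m = k ->
  faults_from step (iota n m) (rev (iota 0 n)) = n /\
  foldl step (iota n m) (rev (iota 0 n)) = iota 0 k.
Proof.
move=> ok; elim=> [|n IH] m e; first by rewrite add0n in e; rewrite e.
rewrite rev_iotaS /= add0n.
have nin : n \notin iota n.+1 m by rewrite mem_iota; apply/negP; lia.
have sz : size (iota n.+1 m) <= k by rewrite size_iota; lia.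
rewrite ok // (insert_fault_take _ hk sz) take_oversize ?size_iota; last by lia.
by have [-> ->] := IH m.+1 ltac:(lia); rewrite nin.
Qed.

Lemma runC k step (hk : 0 < k) : miss_ok k step -> forall t, t <= k ->
  faults_from step [::] (iota 0 t) = t /\ foldl step [::] (iota 0 t) = rev (iota 0 t).
Proof.
move=> ok; elim=> [|t IH] tk //.
rewrite -addn1 iotaD faults_cat foldl_cat /= add0n.
have [-> ->] := IH ltac:(lia).
have nin : t \notin rev (iota 0 t) by rewrite mem_rev mem_iota; apply/negP; lia.
have sz : size (rev (iota 0 t)) <= k by rewrite size_rev size_iota; lia.
rewrite ok // (insert_fault_take _ hk sz) take_oversize ?size_rev ?size_iota; last by lia.
by rewrite nin addn0 cats1 rev_rcons.
Qed.

Lemma fifo_hits k F s : all (fun x => x \in F) s ->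
  faults_from (fifo_step k) F s = 0 /\ foldl (fifo_step k) F s = F.
Proof.
elim: s => [|p s IH] //= /andP [pF h].
by rewrite pF (fifo_hit k pF); have [-> ->] := IH h.
Qed.

Lemma filter_nil (s : seq nat) (a : pred nat) : (forall x, x \in s -> ~~ a x) -> [seq x <- s | a x] = [::].
Proof.
elim: s => [|x s IH] //= h.
rewrite (negbTE (h x (mem_head x s))) IH // => y ys.
by apply: h; rewrite in_cons ys orbT.
Qed.

Lemma lru_hits k s : forall L, uniq L -> uniq s -> all (fun x => x \in L) s ->
  faults_from (lru_step k) L s = 0 /\
  foldl (lru_step k) L s = rev s ++ [seq x <- L | x \notin s].
Proof.
elim: s => [|p s IH] L uL us /=.
  by move=> _; split => //; rewrite filter_predT.
move: us => /andP [ps us] /andP [pL h].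
rewrite pL (lru_hit k pL).
have uL' : uniq (p :: rem p L) by rewrite /= mem_rem_uniqF // rem_uniq.
have h' : all (fun x => x \in p :: rem p L) s.
  apply/allP => x xs; rewrite in_cons mem_rem_uniq // inE.
  have xp : x != p by apply: contraNneq ps => <-.
  by rewrite xp (allP h x xs) orbT.
have [-> ->] := IH _ uL' us h'; split => //.
rewrite rev_cons -cats1 -catA /= (negbTE ps); congr (_ ++ _ :: _).
rewrite rem_filter // -filter_predI; apply: eq_filter => x /=.
by rewrite in_cons negb_or andbC.
Qed.


Lemma uniq_rev_iota a n : uniq (rev (iota a n)).
Proof. by rewrite rev_uniq iota_uniq. Qed.

Lemma hits_shift k a : 
  faults_from (lru_step k.+1) (a :: iota a.+1 k) (rev (iota a.+1 k)) = 0 /\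
  foldl (lru_step k.+1) (a :: iota a.+1 k) (rev (iota a.+1 k)) = iota a.+1 k ++ [:: a].
Proof.
have u : uniq (a :: iota a.+1 k) by rewrite /= iota_uniq mem_iota; apply/negP; lia.
have h : all (fun x => x \in a :: iota a.+1 k) (rev (iota a.+1 k)).
  by apply/allP => x; rewrite mem_rev in_cons => ->; rewrite orbT.
have [-> ->] := lru_hits k.+1 u (uniq_rev_iota _ _) h; split => //.
rewrite revK /= mem_rev mem_iota.
have -> : a.+1 <= a = false by lia.
rewrite /=; congr (_ ++ _ :: _); apply: filter_nil => x; rewrite mem_rev => ->; by [].
Qed.

Lemma hits_append k a : 
  faults_from (lru_step k.+1) ((a + k) :: iota a k) (rev (iota a k)) = 0 /\
  foldl (lru_step k.+1) ((a + k) :: iota a k) (rev (iota a k)) = iota a k.+1.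
Proof.
have u : uniq ((a + k) :: iota a k) by rewrite /= iota_uniq mem_iota; apply/negP; lia.
have h : all (fun x => x \in (a + k) :: iota a k) (rev (iota a k)).
  by apply/allP => x; rewrite mem_rev in_cons => ->; rewrite orbT.
have [-> ->] := lru_hits k.+1 u (uniq_rev_iota _ _) h; split => //.
rewrite revK /= mem_rev mem_iota.
have -> : (a <= a + k < a + k) = false by lia.
rewrite /= filter_nil; first by rewrite cats1 -iotaS_r.
by move=> x; rewrite mem_rev => ->.
Qed.

Definition minseq k m := iota 0 k ++ rev (iota 0 k) ++ flatten [seq rev (iota j k) | j <- iota 1 m].

Lemma min_block k j :
  (faults_from (fifo_step k.+1) (rev (iota j k.+1)) (rev (iota j.+1 k.+1)) = 1 /\
   foldl (fifo_step k.+1) (rev (iota j k.+1)) (rev (iota j.+1 k.+1)) = rev (iota j.+1 k.+1)) /\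
  (faults_from (lru_step k.+1) (iota j k.+1) (rev (iota j.+1 k.+1)) = k.+1 /\
   foldl (lru_step k.+1) (iota j k.+1) (rev (iota j.+1 k.+1)) = iota j.+1 k.+1).
Proof.
split; last first.
  have := runA j (ltn0Sn k) (@lru_ok k.+1) (n := k.+1) (m := 0) erefl.
  move=> h; exact: h.
rewrite [rev (iota j.+1 _)]rev_iotaS /=.
have nin : j.+1 + k \notin rev (iota j k.+1) by rewrite mem_rev mem_iota; apply/negP; lia.
have sz : size (rev (iota j k.+1)) <= k.+1 by rewrite size_rev size_iota.
rewrite nin (fifo_miss (ltn0Sn k) sz nin) /=.
have -> : take k (rev (iota j k.+1)) = rev (iota j.+1 k).
  by rewrite /= rev_cons -cats1 take_size_cat // size_rev size_iota.
rewrite -rev_iotaS.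
have h : all (fun x => x \in rev (iota j.+1 k.+1)) (rev (iota j.+1 k)).
  by apply/allP => x; rewrite !mem_rev !mem_iota; lia.
by have [-> ->] := fifo_hits k.+1 h.
Qed.

Lemma min_blocks k m : forall j,
  faults_from (fifo_step k.+1) (rev (iota j k.+1)) (flatten [seq rev (iota i k.+1) | i <- iota j.+1 m]) = m /\
  faults_from (lru_step k.+1) (iota j k.+1) (flatten [seq rev (iota i k.+1) | i <- iota j.+1 m]) = m * k.+1.
Proof.
elim: m => [|m IH] j //=.
rewrite !faults_cat.
have [[-> ->] [-> ->]] := min_block k j.
by have [-> ->] := IH j.+1; rewrite mulSn add1n.
Qed.

Lemma size_blocks k m : forall j, size (flatten [seq rev (iota i k) | i <- iota j m]) = m * k.
Proof. by elim: m => [|m IH] j //=; rewrite size_cat size_rev size_iota IH mulSn. Qed.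

Lemma minseq_spec k m :
  [/\ FIFO k.+1 (minseq k.+1 m) = k.+1 + m,
      LRU k.+1 (minseq k.+1 m) = k.+1 + m * k.+1 &
      size (minseq k.+1 m) = k.+1 + k.+1 + m * k.+1].
Proof.
rewrite /FIFO /LRU /minseq !faults_cat ?foldl_cat.
have [f1 f2] := runC (ltn0Sn k) (@fifo_ok k.+1) (leqnn k.+1).
have [l1 l2] := runC (ltn0Sn k) (@lru_ok k.+1) (leqnn k.+1).
rewrite f1 f2 l1 l2.
have h : all (fun x => x \in rev (iota 0 k.+1)) (rev (iota 0 k.+1)).
  by apply/allP => x.
have [-> ->] := fifo_hits k.+1 h.
have [-> ->] := lru_hits k.+1 (uniq_rev_iota _ _) (uniq_rev_iota _ _) h.
rewrite revK filter_nil; last by move=> x ->.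
rewrite cats0.
have [-> ->] := min_blocks k m 0.
rewrite !size_cat size_rev size_iota size_blocks; split => //; lia.
Qed.


Definition maxblk k j := rev (iota j k) ++ rev (iota j.+1 k.-1).
Definition maxseq k m := flatten [seq maxblk k j | j <- iota 0 m.+1].

Lemma faults_cons step c p s : faults_from step c (p :: s) = (p \notin c) + faults_from step (step c p) s.
Proof. by []. Qed.
Lemma foldl_cons' (f : seq nat -> nat -> seq nat) z x s : foldl f z (x :: s) = foldl f (f z x) s.
Proof. by []. Qed.

Lemma fifo_hits_iota k a : 
  faults_from (fifo_step k.+1) (iota a k.+1) (rev (iota a.+1 k)) = 0 /\
  foldl (fifo_step k.+1) (iota a k.+1) (rev (iota a.+1 k)) = iota a k.+1.
Proof.
apply: fifo_hits; apply/allP => x; rewrite mem_rev !mem_iota; lia.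
Qed.

Lemma max_block0 k :
  (faults_from (fifo_step k.+1) [::] (maxblk k.+1 0) = k.+1 /\
   foldl (fifo_step k.+1) [::] (maxblk k.+1 0) = iota 0 k.+1) /\
  (faults_from (lru_step k.+1) [::] (maxblk k.+1 0) = k.+1 /\
   foldl (lru_step k.+1) [::] (maxblk k.+1 0) = iota 1 k ++ [:: 0]).
Proof.
rewrite /maxblk !faults_cat !foldl_cat /=.
have [f1 f2] := runB (ltn0Sn k) (@fifo_ok k.+1) (n := k.+1) (m := 0) (addn0 _).
have [l1 l2] := runB (ltn0Sn k) (@lru_ok k.+1) (n := k.+1) (m := 0) (addn0 _).
move: f1 f2 l1 l2; rewrite /= => -> -> -> ->.
have [-> ->] := fifo_hits_iota k 0.
by have [-> ->] := hits_shift k 0; rewrite !addn0.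
Qed.

Lemma max_block k j :
  (faults_from (fifo_step k.+1) (iota j k.+1) (maxblk k.+1 j.+1) = k.+1 /\
   foldl (fifo_step k.+1) (iota j k.+1) (maxblk k.+1 j.+1) = iota j.+1 k.+1) /\
  (faults_from (lru_step k.+1) (iota j.+1 k ++ [:: j]) (maxblk k.+1 j.+1) = 1 /\
   foldl (lru_step k.+1) (iota j.+1 k ++ [:: j]) (maxblk k.+1 j.+1) = iota j.+2 k ++ [:: j.+1]).
Proof.
rewrite /maxblk !faults_cat !foldl_cat -[k.+1.-1]/k; split.
  have := runA j (ltn0Sn k) (@fifo_ok k.+1) (n := k.+1) (m := 0) erefl.
  rewrite /= => -[-> ->].
  by have [-> ->] := fifo_hits_iota k j.+1; rewrite addn0.
rewrite [rev (iota j.+1 _)]rev_iotaS faults_cons foldl_cons'.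
have nin : j.+1 + k \notin iota j.+1 k ++ [:: j].
  by rewrite mem_cat mem_iota in_cons in_nil orbF negb_or; apply/andP; split; apply/negP; lia.
have sz : size (iota j.+1 k ++ [:: j]) <= k.+1 by rewrite size_cat size_iota addn1.
rewrite nin (lru_miss (ltn0Sn k) sz nin) take_size_cat ?size_iota //.
have [-> ->] := hits_append k j.+1.
by have [-> ->] := hits_shift k j.+1.
Qed.

Lemma max_blocks k m : forall j,
  faults_from (fifo_step k.+1) (iota j k.+1) (flatten [seq maxblk k.+1 i | i <- iota j.+1 m]) = m * k.+1 /\
  faults_from (lru_step k.+1) (iota j.+1 k ++ [:: j]) (flatten [seq maxblk k.+1 i | i <- iota j.+1 m]) = m.
Proof.
elim: m => [|m IH] j; first by [].
have e : flatten [seq maxblk k.+1 i | i <- iota j.+1 m.+1] =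
   maxblk k.+1 j.+1 ++ flatten [seq maxblk k.+1 i | i <- iota j.+2 m] by [].
rewrite e !(faults_cat _ _ (maxblk k.+1 j.+1)).
have [[-> ->] [-> ->]] := max_block k j.
by have [-> ->] := IH j.+1; rewrite mulSn add1n.
Qed.

Lemma size_maxblocks k m : forall j, size (flatten [seq maxblk k.+1 i | i <- iota j m]) = m * (k.+1 + k).
Proof. by elim: m => [|m IH] j //=; rewrite size_cat /maxblk size_cat !size_rev !size_iota IH mulSn. Qed.

Lemma maxseq_spec k m :
  [/\ FIFO k.+1 (maxseq k.+1 m) = k.+1 + m * k.+1,
      LRU k.+1 (maxseq k.+1 m) = k.+1 + m &
      size (maxseq k.+1 m) = (m.+1) * (k.+1 + k)].
Proof.
have e : maxseq k.+1 m = maxblk k.+1 0 ++ flatten [seq maxblk k.+1 i | i <- iota 1 m] by [].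
rewrite /FIFO /LRU e !(faults_cat _ _ (maxblk k.+1 0)).
have [[-> ->] [-> ->]] := max_block0 k.
have [-> ->] := max_blocks k m 0.
by rewrite size_cat size_maxblocks /maxblk size_cat !size_rev !size_iota mulSn.
Qed.


Lemma lower' k I : (k.+1 * LRU k.+1 I <= k.+1 * FIFO k.+1 I + k * size I + k)%N.
Proof. by have := lower_bound (ltn0Sn k) I; rewrite subSS subn0. Qed.

Lemma upper' k I : (k.*2.+1 * FIFO k.+1 I <= k.*2.+1 * LRU k.+1 I + k * size I)%N.
Proof.
have := upper_bound (ltn0Sn k) I.
have -> : (2 * k.+1 - 1 = k.*2.+1)%N by lia.
by rewrite subSS subn0.
Qed.

Local Open Scope ring_scope.
Local Open Scope classical_set_scope.

Lemma esup_eq (R : realType) (v : nat -> R) (r : R) :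
  (forall e : R, 0 < e -> exists N, forall n, (N <= n)%N -> v n <= r + e) ->
  (forall e : R, 0 < e -> forall N, exists n, (N <= n)%N /\ r - e <= v n) ->
  limn_esup (fun n => (v n)%:E) = r%:E.
Proof.
move=> hub hlb.
rewrite limn_esup_lim.
have -> : limn (esups (fun n => (v n)%:E)) = ereal_inf (range (esups (fun n => (v n)%:E))).
  by apply/cvg_lim => //; exact: cvg_esups_inf.
apply/eqP; rewrite eq_le; apply/andP; split.
- apply/lee_addgt0Pr => e e0.
  have [N hN] := hub e e0.
  apply: (le_trans (ereal_inf_lbound _)); first by exists N.
  apply: ge_ereal_sup => _ [n /= Nn <-].
  by rewrite -EFinD lee_fin; apply: hN.
- apply: le_ereal_inf_tmp => _ [N _ <-].
  apply/lee_subgt0Pr => e e0.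
  have [n [Nn hn]] := hlb e e0 N.
  apply: le_ereal_sup_tmp; exists (v n)%:E; first by exists n.
  by rewrite -EFinB lee_fin.
Qed.

Lemma einf_neg (R : realType) (w : nat -> R) :
  limn_einf (fun n => (w n)%:E) = (- limn_esup (fun n => (- w n)%:E))%E.
Proof. by rewrite /limn_einf; congr (- limn_esup _)%E; apply/funext => n. Qed.

Lemma archi_N (R : realType) (e : R) : 0 < e -> exists N : nat, (0 < N)%N /\ 1 < e * N%:R.
Proof.
move=> e0; have ei : 0 <= e^-1 by rewrite invr_ge0 ltW.
have h := @archi_boundP R e^-1 ei.
set N := Num.Def.archi_bound _ in h.
exists N; split.
  by rewrite -(ltr0n R); apply: le_lt_trans h; rewrite invr_ge0 ltW.
by move: h; rewrite -[e^-1]mulr1 ltr_pdivrMl.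
Qed.

Theorem theorem1 (R : realType) (k : nat) (hk : (1 <= k)%N) :
  @RelMin R (FIFO k) (LRU k) = (-1 + 1 / k%:R : R)%:E /\
  @RelMax R (FIFO k) (LRU k) = (1 / 2 - 1 / (4 * k%:R - 2) : R)%:E.
Proof.
case: k hk => // k _.
set D := @diff_set R (FIFO k.+1) (LRU k.+1).
have Kpos : (0 : R) < k.+1%:R by rewrite ltr0n.
have kS : (k.+1%:R : R) = k%:R + 1 by rewrite -natr1.
have k0 : (0 : R) <= k%:R by rewrite ler0n.
have ne n : D n !=set0.
  exists ((FIFO k.+1 (nseq n 0%N))%:R - (LRU k.+1 (nseq n 0%N))%:R).
  by exists (nseq n 0%N); rewrite size_nseq.
have lbD n x : D n x -> - (k%:R * n.+1%:R) / k.+1%:R <= x.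
  move=> [I [sI ->]]; have h := lower' k I; rewrite sI in h.
  have h' : ((k.+1 * LRU k.+1 I)%N%:R : R) <= (k.+1 * FIFO k.+1 I + k * n + k)%N%:R by rewrite ler_nat.
  rewrite !natrD !natrM in h'.
  rewrite ler_pdivrMr // -natr1 mulrDr mulr1.
  rewrite kS; nra.
have ubD n x : D n x -> x <= k%:R * n%:R / (k.*2.+1)%:R.
  move=> [I [sI ->]]; have h := upper' k I; rewrite sI in h.
  have h' : ((k.*2.+1 * FIFO k.+1 I)%N%:R : R) <= (k.*2.+1 * LRU k.+1 I + k * n)%N%:R by rewrite ler_nat.
  rewrite !natrD !natrM in h'.
  rewrite ler_pdivlMr ?ltr0n //.
  nra.
have Min_ge n : - (k%:R * n.+1%:R) / k.+1%:R <= MinAB R (FIFO k.+1) (LRU k.+1) n.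
  by apply: lb_le_inf (ne n) _ => x hx; exact: lbD.
have Min_le I : MinAB R (FIFO k.+1) (LRU k.+1) (size I) <= (FIFO k.+1 I)%:R - (LRU k.+1 I)%:R.
  apply: ge_inf; last by exists I.
  by exists (- (k%:R * (size I).+1%:R) / k.+1%:R) => x hx; exact: lbD.
have Max_le n : MaxAB R (FIFO k.+1) (LRU k.+1) n <= k%:R * n%:R / (k.*2.+1)%:R.
  by apply: ge_sup (ne n) _ => x hx; exact: ubD.
have Max_ge I : (FIFO k.+1 I)%:R - (LRU k.+1 I)%:R <= MaxAB R (FIFO k.+1) (LRU k.+1) (size I).
  apply: ub_le_sup; last by exists I.
  by exists (k%:R * (size I)%:R / (k.*2.+1)%:R) => x hx; exact: ubD.
split.
- rewrite /RelMin einf_neg.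
  rewrite (@esup_eq _ _ (1 - 1 / k.+1%:R)); first by rewrite -EFinN; congr EFin; ring.
  + move=> e e0; have [N [N0 hN]] := archi_N e0; exists N => n Nn.
    have n0 : (0 : R) < n%:R by rewrite ltr0n (leq_trans N0 Nn).
    have xN : (N%:R : R) <= n%:R by rewrite ler_nat.
    have ex : 1 < e * n%:R by apply: (lt_le_trans hN); rewrite ler_pM2l.
    have h := Min_ge n; rewrite ler_pdivrMr // in h.
    set a := MinAB _ _ _ n in h *.
    rewrite -mulNr ler_pdivrMr //.
    set t := 1 / k.+1%:R.
    have tK : t * k.+1%:R = 1 by rewrite /t mul1r mulVf // gt_eqF.
    rewrite -natr1 in h; rewrite kS in tK Kpos h; nra.
  + move=> e e0 N; have [M [M0 hM]] := archi_N e0.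
    have [F1 L1 S1] := minseq_spec k (M.*2 + N).
    set m := (M.*2 + N)%N in F1 L1 S1.
    have mN : (N <= m)%N by rewrite /m leq_addl.
    have mM : (M.*2 <= m)%N by rewrite /m leq_addr.
    clearbody m.
    exists (size (minseq k.+1 m)); split; first by rewrite S1; lia.
    have h := Min_le (minseq k.+1 m); rewrite F1 L1 in h.
    set a := MinAB _ _ _ _ in h *.
    rewrite S1 !natrD !natrM in h *.
    have x0 : (0 : R) < k.+1%:R + k.+1%:R + m%:R * k.+1%:R.
      by rewrite -!natrM -!natrD ltr0n; lia.
    rewrite -[- (a / _)]mulNr ler_pdivlMr //.
    set t := 1 / k.+1%:R.
    have tK : t * k.+1%:R = 1 by rewrite /t mul1r mulVf // gt_eqF.
    have tk : (1 - t) * k.+1%:R = k%:R by rewrite mulrBl mul1r tK kS; ring.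
    have -> : (1 - t - e) * (k.+1%:R + k.+1%:R + m%:R * k.+1%:R) =
        (2 + m%:R) * ((1 - t) * k.+1%:R) - e * ((2 + m%:R) * k.+1%:R) by ring.
    rewrite tk.
    have em : 2 < e * m%:R.
      have : (M.*2%:R : R) <= m%:R by rewrite ler_nat.
      rewrite -muln2 natrM => hm.
      have : e * (M%:R * 2%:R) <= e * m%:R by rewrite ler_pM2l.
      nra.
    rewrite kS in Kpos h *; nra.
- rewrite /RelMax.
  have e2 : ((k.*2.+1)%:R : R) = 2 * k%:R + 1 by rewrite -natr1 -muln2 natrM mulrC.
  have d0 : (0 : R) < (k.*2.+1)%:R by rewrite ltr0n.
  pose r : R := k%:R / (k.*2.+1)%:R.
  have rd : r * (k.*2.+1)%:R = k%:R by rewrite /r mulfVK // gt_eqF.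
  rewrite (@esup_eq _ _ r).
    congr EFin; rewrite /r e2 kS; field.
    by apply/andP; split; apply/eqP; lra.
  + move=> e e0; exists 1%N => n n1.
    have n0 : (0 : R) < n%:R by rewrite ltr0n.
    have h := Max_le n; rewrite mulrAC -/r in h.
    rewrite ler_pdivrMr //; nra.
  + move=> e e0 N; have [M [M0 hM]] := archi_N e0.
    have [F1 L1 S1] := maxseq_spec k (M + N).
    set m := (M + N)%N in F1 L1 S1.
    have mN : (N <= m)%N by rewrite /m leq_addl.
    have mM : (M <= m)%N by rewrite /m leq_addr.
    clearbody m.
    exists (size (maxseq k.+1 m)); split; first by rewrite S1; nia.
    have h := Max_ge (maxseq k.+1 m); rewrite F1 L1 in h.
    set a := MaxAB _ _ _ _ in h *.
    have eS : (m.+1 * (k.+1 + k))%N = (m.+1 * k.*2.+1)%N by congr muln; lia.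
    rewrite S1 eS !natrD !natrM in h *.
    have x0 : (0 : R) < m.+1%:R * (k.*2.+1)%:R by rewrite -natrM ltr0n; lia.
    rewrite ler_pdivlMr //.
    have -> : (r - e) * (m.+1%:R * (k.*2.+1)%:R) = m.+1%:R * (r * (k.*2.+1)%:R) - e * (m.+1%:R * (k.*2.+1)%:R) by ring.
    rewrite rd.
    have em : 1 < e * m.+1%:R.
      have : e * M%:R <= e * m.+1%:R by rewrite ler_pM2l // ler_nat; lia.
      nra.
    rewrite ?e2 ?kS -?natr1 in h em *; nra.
Qed.
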